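(* Assume $Spr(\beta)$. (i) For each $\alpha\in\mathcal{F}_\beta$: $\alpha$ is an isolated point of $\mathcal{F}_\beta$ if and only if $\alpha$ is a decidable point of $\mathcal{F}_\beta$. (ii) The set $\mathcal{I}(\mathcal{F}_\beta)$ of isolated points of $\mathcal{F}_\beta$ is a definable subset of the structure $(\mathcal{F}_\beta,=)$.
   Context: Intuitionistic mathematics (constructive reading of logical constants; Markov's Principle not assumed), with Brouwer's Continuity Principle as an axiom: for every $R\subseteq\mathcal{N}\times\omega$, if $\forall\alpha\exists n[\alpha R n]$, then $\forall\alpha\exists m\exists n\forall\beta[\overline{\alpha}m\sqsubset\beta\rightarrow\beta R n]$. $\mathcal{N}=\omega^\omega$; finite sequences of naturals are coded by naturals, $\overline{\alpha}m=\langle\alpha(0),\dots,\alpha(m-1)\rangle$, $s\sqsubset\gamma$ means $s$ is an initial segment of $\gamma$. $\mathcal{F}_\beta:=\{\alpha\mid\forall n[\beta(\overline{\alpha}n)=0]\}$; $Spr(\beta)$ iff $\forall s[\beta(s)=0\leftrightarrow\exists n[\beta(s\ast\langle n\rangle)=0]]$. For $\alpha\in\mathcal{F}_\beta$: $\alpha$ is an isolated point of $\mathcal{F}_\beta$ iff $\exists n\forall\gamma\in\mathcal{F}_\beta[\overline{\alpha}n\sqsubset\gamma\rightarrow\alpha=\gamma]$; $\alpha$ is a decidable point of $\mathcal{F}_\beta$ iff $\forall\gamma\in\mathcal{F}_\beta[\alpha=\gamma\vee\neg(\alpha=\gamma)]$, i.e. $(\mathcal{F}_\beta,=)\models D[\alpha]$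 where $D(\mathsf{x})$ is the formula $\forall\mathsf{y}[\mathsf{x}=\mathsf{y}\vee\neg(\mathsf{x}=\mathsf{y})]$. A subset $X$ of $\mathcal{F}_\beta$ is definable in $(\mathcal{F}_\beta,=)$ if there is a first-order formula $\varphi(\mathsf{x})$ in the language with only $=$ such that $X=\{\alpha\in\mathcal{F}_\beta\mid(\mathcal{F}_\beta,=)\models\varphi[\alpha]\}$ (satisfaction read intuitionistically). *)

(* Defs.v *)
(* Intuitionistic: no classical axioms are used anywhere. *)
From Stdlib Require Import List Arith.
Import ListNotations.

Definition Baire := nat -> nat.

(* Finite sequences are represented directly as lists of naturals
   (instead of naturals coding them). *)
Definition fseq := list nat.

Definition prefix (a : Baire) (m : nat) : fseq := map a (seq 0 m).

Definition initseg (s : fseq) (g : Baire) : Prop := prefix g (length s) = s.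

Definition beq (a b : Baire) : Prop := forall n, a n = b n.

Definition BCP : Prop :=
  forall R : Baire -> nat -> Prop,
    (forall a, exists n, R a n) ->
    forall a, exists m n, forall b, initseg (prefix a m) b -> R b n.

Definition inF (beta : fseq -> nat) (a : Baire) : Prop :=
  forall n, beta (prefix a n) = 0.

Definition Spr (beta : fseq -> nat) : Prop :=
  forall s, beta s = 0 <-> exists n, beta (s ++ [n]) = 0.

Definition isolated (beta : fseq -> nat) (a : Baire) : Prop :=
  exists n, forall g, inF beta g -> initseg (prefix a n) g -> beq a g.

Definition decidable_point (beta : fseq -> nat) (a : Baire) : Prop :=
  forall g, inF beta g -> beq a g \/ ~ beq a g.

Inductive form : Type :=
| fEq  : nat -> nat -> form
| fBot : form
| fAnd : form -> form -> form
| fOr  : form -> form -> form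
| fImp : form -> form -> form
| fAll : form -> form
| fEx  : form -> form.

Fixpoint fv_below (k : nat) (f : form) : Prop :=
  match f with
  | fEq i j => i < k /\ j < k
  | fBot => True
  | fAnd p q | fOr p q | fImp p q => fv_below k p /\ fv_below k q
  | fAll p | fEx p => fv_below (S k) p
  end.

Definition scons {D : Type} (x : D) (e : nat -> D) : nat -> D :=
  fun n => match n with 0 => x | S m => e m end.

Definition FDom (beta : fseq -> nat) : Type := { a : Baire | inF beta a }.

Fixpoint sat (beta : fseq -> nat) (e : nat -> FDom beta) (f : form) : Prop :=
  match f with
  | fEq i j => beq (proj1_sig (e i)) (proj1_sig (e j))
  | fBot => False
  | fAnd p q => sat beta e p /\ sat beta e q
  | fOr p q => sat beta e p \/ sat beta e q
  | fImp p q => sat beta e p -> sat beta e q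
  | fAll p => forall x : FDom beta, sat beta (scons x e) p
  | fEx p => exists x : FDom beta, sat beta (scons x e) p
  end.

Definition definable (beta : fseq -> nat) (X : Baire -> Prop) : Prop :=
  exists phi : form, fv_below 1 phi /\
    forall (x : FDom beta) (e : nat -> FDom beta),
      sat beta (scons x e) phi <-> X (proj1_sig x).

(* Main.v *)
Require Import Defs.
From Stdlib Require Import List Arith ConstructiveEpsilon Lia.
Import ListNotations.

Lemma prefix_S (a : Baire) n : prefix a (S n) = prefix a n ++ [a n].
Proof. unfold prefix. rewrite seq_S, map_app. reflexivity. Qed.

Lemma prefix_len (a : Baire) n : length (prefix a n) = n.
Proof. unfold prefix. rewrite length_map, length_seq. reflexivity. Qed.

Lemma prefix_eq_beq (a g : Baire) n :
  prefix a n = prefix g n -> forall i, i < n -> a i = g i.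
Proof.
  induction n; intros H i Hi; [lia|].
  rewrite !prefix_S in H. apply app_inj_tail in H as [H1 H2].
  inversion H2; subst.
  destruct (Nat.eq_dec i n); [subst; auto|]. apply IHn; auto; lia.
Qed.

Lemma beq_prefix (a g : Baire) n : beq a g -> prefix a n = prefix g n.
Proof. intro H. unfold prefix. apply map_ext. auto. Qed.

Section Retr.
Variable beta : fseq -> nat.
Hypothesis Hspr : Spr beta.

Definition Pn (s : fseq) (m : nat) : Prop := beta (s ++ [m]) = 0 \/ beta s <> 0.

Lemma Pn_dec s m : {Pn s m} + {~ Pn s m}.
Proof.
  unfold Pn. destruct (Nat.eq_dec (beta (s ++ [m])) 0); [left; auto|].
  destruct (Nat.eq_dec (beta s) 0); [right; intros [H|H]; auto|left; auto].
Qed.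

Lemma Pn_ex s : exists m, Pn s m.
Proof.
  unfold Pn. destruct (Nat.eq_dec (beta s) 0) as [e|e].
  - apply Hspr in e as [m Hm]. exists m; auto.
  - exists 0; auto.
Qed.

Definition choose (s : fseq) : nat :=
  proj1_sig (constructive_indefinite_ground_description_nat _ (Pn_dec s) (Pn_ex s)).

Lemma choose_spec s : Pn s (choose s).
Proof. unfold choose. destruct constructive_indefinite_ground_description_nat; auto. Qed.

Fixpoint rpref (g : Baire) (n : nat) : fseq :=
  match n with
  | 0 => []
  | S k => let s := rpref g k in
           s ++ [if Nat.eq_dec (beta (s ++ [g k])) 0 then g k else choose s]
  end.

Definition r (g : Baire) : Baire := fun n => last (rpref g (S n)) 0.

Lemma prefix_r g n : prefix (r g) n = rpref g n.
Proof.
  induction n; [reflexivity|].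
  rewrite prefix_S, IHn. simpl. f_equal. f_equal.
  unfold r. simpl. rewrite last_last. reflexivity.
Qed.

Lemma r_inF g : beta [] = 0 -> inF beta (r g).
Proof.
  intros H0 n. rewrite prefix_r. induction n; simpl; auto.
  destruct Nat.eq_dec; auto.
  destruct (choose_spec (rpref g n)); auto. contradiction.
Qed.

Lemma r_id g : inF beta g -> beq (r g) g.
Proof.
  intros Hg.
  assert (E : forall n, rpref g n = prefix g n).
  { induction n; [reflexivity|]. simpl. rewrite IHn, prefix_S.
    destruct Nat.eq_dec as [_|ne]; auto.
    exfalso; apply ne. rewrite <- prefix_S. apply Hg. }
  intro n. unfold r. rewrite E, prefix_S, last_last. reflexivity.
Qed.
End Retr.

Theorem lemma5p3 (Hbcp : BCP) (beta : fseq -> nat) (Hspr : Spr beta) :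
  (forall a : Baire, inF beta a -> (isolated beta a <-> decidable_point beta a))
  /\ definable beta (isolated beta).
Proof.
  assert (P1 : forall a : Baire, inF beta a -> (isolated beta a <-> decidable_point beta a)).
  { intros a Ha. split.
    - intros [n Hn] g Hg.
      destruct (list_eq_dec Nat.eq_dec (prefix g n) (prefix a n)) as [e|ne].
      + left. apply Hn; auto. unfold initseg. rewrite prefix_len. auto.
      + right. intro B. apply ne. symmetry. apply beq_prefix; auto.
    - intros D.
      pose (R := fun g k => (k = 0 /\ beq a (r beta Hspr g)) \/
                            (k <> 0 /\ ~ beq a (r beta Hspr g))).
      assert (H0 : beta [] = 0) by exact (Ha 0).
      assert (Tot : forall g, exists k, R g k).
      { intro g. destruct (D _ (r_inF beta Hspr g H0)) as [e|ne].
        - exists 0; left; auto.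
        - exists 1; right; auto. }
      destruct (Hbcp R Tot a) as [m [k Hk]].
      assert (k = 0).
      { destruct (Hk a) as [[? ?]|[_ N]]; auto.
        - unfold initseg. rewrite prefix_len. auto.
        - exfalso; apply N. intro i. symmetry. apply r_id; auto. }
      subst k. exists m. intros g Hg Hi.
      destruct (Hk g Hi) as [[_ B]|[N _]]; [|lia].
      intro i. rewrite B. apply r_id; auto. }
  split; auto.
  exists (fAll (fOr (fEq 1 0) (fImp (fEq 1 0) fBot))). split.
  - simpl. lia.
  - intros [x Hx] e. simpl. rewrite (P1 x Hx). split.
    + intros H g Hg. exact (H (exist _ g Hg)).
    + intros H [g Hg]. exact (H g Hg).
Qed.
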